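(* Let $A$ be a unital power-associative algebra over a field $F$ (of any characteristic) which is algebraic, and let $R$ be a Rota–Baxter operator of weight zero on $A$. Then $R(1)$ is nilpotent.
   Context: A linear operator $R$ on $A$ is a Rota–Baxter operator of weight $0$ if $R(x)R(y)=R(R(x)y+xR(y))$ for all $x,y\in A$. Power-associative: every element generates an associative subalgebra. Algebraic: every element satisfies a nonzero polynomial equation over $F$. *)

(* Defs.v *)
(* Nonassociative algebras are not in MathComp, so an
   F-algebra is represented as an F-vector space V (lmodType F) with a
   bilinear multiplication [mul] and a unit [one]. *)
From HB Require Import structures.
From mathcomp Require Import all_boot all_order all_algebra.
Set Implicit Arguments. Unset Strict Implicit. Unset Printing Implicit Defensive.
Import GRing.Theory.
Local Open Scope ring_scope.

Section NonassocAlg.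
Variables (F : fieldType) (V : lmodType F) (mul : V -> V -> V) (one : V).

Definition bilinear_mul : Prop :=
  (forall x, linear (mul x)) /\ (forall y, linear (fun x => mul x y)).

Definition is_unit_elt : Prop :=
  forall x, mul one x = x /\ mul x one = x.

Inductive gen_subalg (x : V) : V -> Prop :=
  | gen_self : gen_subalg x x
  | gen_zero : gen_subalg x 0
  | gen_add a b : gen_subalg x a -> gen_subalg x b -> gen_subalg x (a + b)
  | gen_scale (c : F) a : gen_subalg x a -> gen_subalg x (c *: a)
  | gen_mul a b : gen_subalg x a -> gen_subalg x b -> gen_subalg x (mul a b).

Definition power_associative : Prop :=
  forall x a b c, gen_subalg x a -> gen_subalg x b -> gen_subalg x c ->
    mul (mul a b) c = mul a (mul b c).

(* powers x^0 = 1, x^(n+1) = x * x^n (well defined by power-associativity) *)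
Fixpoint apow (x : V) (n : nat) : V :=
  match n with O => one | S m => mul x (apow x m) end.

Definition aeval (p : {poly F}) (x : V) : V :=
  \sum_(i < size p) p`_i *: apow x i.

Definition algebraic_alg : Prop :=
  forall x, exists2 p : {poly F}, p != 0 & aeval p x = 0.

Definition rota_baxter0 (R : V -> V) : Prop :=
  forall x y, mul (R x) (R y) = R (mul (R x) y + mul x (R y)).

Definition anilpotent (x : V) : Prop := exists n : nat, apow x n = 0.

End NonassocAlg.

(* Main.v *)
Require Import Defs.
From HB Require Import structures.
From mathcomp Require Import all_boot all_order all_algebra.
Import GRing.Theory.
Local Open Scope ring_scope.

Set Implicit Arguments.
Section Aux.
Variables (F : fieldType) (V : lmodType F).

Lemma lin0 (f : V -> V) : linear f -> f 0 = 0.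
Proof.
move=> Hf; have := Hf (-1) 0 0.
by rewrite scaler0 addr0 scaleN1r addNr.
Qed.

Lemma linD (f : V -> V) : linear f -> forall u v, f (u + v) = f u + f v.
Proof. by move=> Hf u v; have := Hf 1 u v; rewrite !scale1r. Qed.

Lemma linZ (f : V -> V) : linear f -> forall a u, f (a *: u) = a *: f u.
Proof.
move=> Hf a u; have := Hf a u 0; rewrite !addr0 => ->.
by rewrite (lin0 Hf) addr0.
Qed.

Lemma linN (f : V -> V) : linear f -> forall u, f (- u) = - f u.
Proof. by move=> Hf u; rewrite -scaleN1r (linZ Hf) scaleN1r. Qed.

Lemma linsum (f : V -> V) : linear f -> forall n (g : 'I_n -> V),
  f (\sum_(i < n) g i) = \sum_(i < n) f (g i).
Proof.
move=> Hf; elim=> [|n IH] g; first by rewrite !big_ord0 (lin0 Hf).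
by rewrite !big_ord_recr /= (linD Hf) IH.
Qed.

End Aux.
Unset Implicit Arguments.

Theorem lemma10 (F : fieldType) (V : lmodType F) (mul : V -> V -> V) (one : V)
  (Hbil : bilinear_mul mul) (Hone : is_unit_elt mul one)
  (Hpa : power_associative mul) (Halg : algebraic_alg mul one)
  (R : {linear V -> V}) (HR : rota_baxter0 mul R) :
  anilpotent mul one (R one).
Proof.
case: Hbil => HL HRt.
set e := fun n => iter n R one.
have Rlin : linear (R : V -> V) by move=> a u v; rewrite linearP.
have eS n : e n.+1 = R (e n) by [].
have emul : forall n a b, (a + b = n)%N ->
    mul (e a) (e b) = ('C(a + b, a))%:R *: e (a + b)%N.
  elim=> [|n IH] a b Hab.
    move/eqP: Hab; rewrite addn_eq0 => /andP[/eqP-> /eqP->].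
    by rewrite /= (proj1 (Hone one)) scale1r.
  case: a Hab => [|a] Hab.
    by rewrite add0n bin0 scale1r; change (e 0%N) with one; rewrite (proj1 (Hone _)).
  case: b Hab => [|b] Hab.
    by rewrite addn0 binn scale1r; change (e 0%N) with one; rewrite (proj2 (Hone _)).
  rewrite (eS a) (eS b) HR -(eS a) -(eS b).
  rewrite (IH a.+1 b); last by rewrite addnS in Hab; case: Hab.
  rewrite (IH a b.+1); last by rewrite addSn in Hab; case: Hab.
  rewrite addnS addSn -scalerDl -natrD (linZ Rlin) -eS.
  by rewrite -addnS -addSn binS addnC.
have {}emul a b := emul _ a b erefl.
have r1 : R one = e 1 by [].
have powe : forall n, apow mul one (R one) n = (n`!)%:R *: e n.
  elim=> [|n IH]; first by rewrite /= scale1r.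
  rewrite /= IH (linZ (HL _)) r1 emul // bin1 scalerA -natrM.
  by rewrite factS mulnC.
have fact0 : forall n, (n`!)%:R = 0 :> F -> anilpotent mul one (R one).
  by move=> n Hn; exists n; rewrite powe Hn scale0r.
have main : forall w k (c : nat -> F), c w != 0 ->
    \sum_(i < w.+1) c i *: e (k + i)%N = 0 -> anilpotent mul one (R one).
  elim=> [|w IH] k c Hc Hsum.
    move: Hsum; rewrite big_ord1 addn0 /= => /eqP.
    rewrite scaler_eq0 (negbTE Hc) /= => /eqP Hk.
    by exists k; rewrite powe Hk scaler0.
  have [Hw|Hw] := eqVneq ((w.+1)`!)%:R (0 : F); first exact: (fact0 _ Hw).
  have Hw1 : (w.+1)%:R != 0 :> F.
    apply: contra Hw => /eqP Hw'; by rewrite factS natrM Hw' mul0r.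
  have T1 : \sum_(i < w.+2) c i *: e (k + i)%N.+1 = 0.
    have := congr1 R Hsum; rewrite (lin0 Rlin) (linsum Rlin) => H.
    by rewrite -[RHS]H; apply: eq_bigr => i _; rewrite (linZ Rlin).
  have T2 : \sum_(i < w.+2) (c i * (k + i)%N.+1%:R) *: e (k + i)%N.+1 = 0.
    have := congr1 (mul (e 1)) Hsum; rewrite (lin0 (HL _)) (linsum (HL _)) => H; rewrite -[RHS]H.
    apply: eq_bigr => i _; rewrite (linZ (HL _)) emul scalerA.
    by rewrite add1n bin1.
  have T3 : \sum_(i < w.+2) (c i * i%:R) *: e (k + i)%N.+1 = 0.
    have -> : \sum_(i < w.+2) (c i * i%:R) *: e (k + i)%N.+1 =
      \sum_(i < w.+2) (c i * (k + i)%N.+1%:R) *: e (k + i)%N.+1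
      - (k.+1)%:R *: \sum_(i < w.+2) c i *: e (k + i)%N.+1.
      rewrite scaler_sumr -sumrB; apply: eq_bigr => i _.
      rewrite scalerA -scalerBl; congr (_ *: _).
      by rewrite -addSn natrD mulrDr (mulrC _ (c i)) addrAC subrr add0r.
    by rewrite T1 T2 scaler0 subr0.
  apply: (IH k.+2 (fun j => c j.+1 * j.+1%:R)).
    by rewrite mulf_neq0.
  rewrite -[RHS]T3 [RHS]big_ord_recl /= mulr0 scale0r add0r.
  by apply: eq_bigr => i _; rewrite /bump /= add1n ?addnS ?addSn.
have [p Hp0 Hp] := Halg (R one).
have Hsz : (0 < size p)%N by rewrite size_poly_gt0.
set w := (size p).-1.
have [Hw|Hw] := eqVneq (w`!)%:R (0 : F); first exact: (fact0 _ Hw).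
apply: (main w 0%N (fun i => p`_i * (i`!)%:R)).
  rewrite mulf_neq0 // /w -lead_coefE lead_coef_eq0 //.
rewrite -[RHS]Hp /aeval /w prednK //; apply: eq_bigr => i _.
by rewrite powe scalerA add0n.
Qed.
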